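(* For all $t,s_1,s_2\in\Lambda^\infty$: if $t\to^\infty_N s_1$ and $t\to^\infty_N s_2$, then $s_1\equiv s_2$.
   Context: Fix an infinite set $V$ of variables and a set $C$ of constants with $V\cap C=\emptyset$, containing a distinguished constant $\bot$. $\Lambda^\infty$ is the set of infinitary lambda-terms: all finite and infinite terms generated coinductively by $t ::= c\mid x\mid t\,t\mid\lambda x.t$, identified up to $\alpha$-equivalence; $s[t/x]$ is capture-avoiding substitution; $\equiv$ is identity; an atom is a variable or constant. $\to_\beta$ is the compatible closure of $\{((\lambda x.s)t,s[t/x])\}$, $\to^*_\beta$ its reflexive-transitive closure. A term is in head normal form (hnf) if it is $\lambda x_1\ldots x_m.\,a\,t_1\ldots t_n$ ($m,n\ge0$, $a$ an atom, $a\not\equiv\bot$); $t$ has a hnf if $t\to^*_\beta t'$ for some $t'$ in hnf. Weak head contraction $\to_w$ is the least relation with $(\lambda x.s)t\to_w s[t/x]$ and $s\to_w s'\Rightarrow st\to_w s't$; head contraction $\to_h$ is the least relation with $s\to_w s'\Rightarrow s\to_h s'$ and $s\to_h s'\Rightarrow\lambda x.s\to_h\lambda x.s'$; $\to^*_h$ is its reflexive-transitive closure. The relation $\to^\infty_N$ is the greatest relation such that whenever $t\to^\infty_N u$, either (i) $u\equiv\bot$ and $t$ has no hnf, or (ii) $u\equiv\lambda x_1\ldots x_n.\,a\,t_1'\ldots t_m'$ with $a$ an atom, $a\not\equiv\bot$, and there are $t_1,\ldots,t_m$ with $t\to^*_h\lambda x_1\ldots x_n.\,a\,t_1\ldots t_m$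 and $t_i\to^\infty_N t_i'$ for $i=1,\ldots,m$. *)

(* Defs.v *)
From Stdlib Require Import List Relations.
Set Implicit Arguments.

Section Terms.
Variable C : Type.
Variable bot : C.

(* Lambda^infty: finite and infinite terms, coinductively; variables are
   de Bruijn indices (so alpha-equivalent terms are syntactically equal). *)
CoInductive term : Type :=
| Var : nat -> term
| Cst : C -> term
| App : term -> term -> term
| Lam : term -> term.

(* Identity (≡) of infinitary terms: bisimilarity. *)
CoInductive bisim : term -> term -> Prop :=
| bisim_var : forall n, bisim (Var n) (Var n)
| bisim_cst : forall c, bisim (Cst c) (Cst c)
| bisim_app : forall a b a' b', bisim a a' -> bisim b b' -> bisim (App a b) (App a' b')
| bisim_lam : forall s s', bisim s s' -> bisim (Lam s) (Lam s').

Definition upren (r : nat -> nat) (n : nat) : nat :=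
  match n with 0 => 0 | S k => S (r k) end.

CoFixpoint ren (r : nat -> nat) (t : term) : term :=
  match t with
  | Var n => Var (r n)
  | Cst c => Cst c
  | App a b => App (ren r a) (ren r b)
  | Lam s => Lam (ren (upren r) s)
  end.

Definition up (sg : nat -> term) (n : nat) : term :=
  match n with 0 => Var 0 | S k => ren S (sg k) end.

CoFixpoint subst (sg : nat -> term) (t : term) : term :=
  match t with
  | Var n => sg n
  | Cst c => Cst c
  | App a b => App (subst sg a) (subst sg b)
  | Lam s => Lam (subst (up sg) s)
  end.

(* s[u/x] where x is the variable bound by the enclosing lambda (index 0) *)
Definition subst0 (u s : term) : term :=
  subst (fun n => match n with 0 => u | S k => Var k end) s.

Inductive bstep : term -> term -> Prop :=
| b_root : forall s u, bstep (App (Lam s) u) (subst0 u s)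
| b_appl : forall a a' b, bstep a a' -> bstep (App a b) (App a' b)
| b_appr : forall a b b', bstep b b' -> bstep (App a b) (App a b')
| b_lam  : forall s s', bstep s s' -> bstep (Lam s) (Lam s').

Definition bstar := clos_refl_trans term bstep.

Inductive wstep : term -> term -> Prop :=
| w_root : forall s u, wstep (App (Lam s) u) (subst0 u s)
| w_appl : forall a a' b, wstep a a' -> wstep (App a b) (App a' b).

Inductive hstep : term -> term -> Prop :=
| h_w : forall s s', wstep s s' -> hstep s s'
| h_lam : forall s s', hstep s s' -> hstep (Lam s) (Lam s').

Definition hstar := clos_refl_trans term hstep.

Inductive atom : Type := AVar : nat -> atom | ACst : C -> atom.

Definition atom_tm (a : atom) : term :=
  match a with AVar n => Var n | ACst c => Cst c end.

Fixpoint lams (n : nat) (t : term) : term :=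
  match n with 0 => t | S k => Lam (lams k t) end.

Definition apps (h : term) (ts : list term) : term := fold_left App ts h.

Definition is_hnf (t : term) : Prop :=
  exists n a ts, a <> ACst bot /\ t = lams n (apps (atom_tm a) ts).

Definition has_hnf (t : term) : Prop := exists t', bstar t t' /\ is_hnf t'.

CoInductive NR : term -> term -> Prop :=
| NR_bot : forall t, ~ has_hnf t -> NR t (Cst bot)
| NR_hnf : forall t n a ts ts',
    a <> ACst bot ->
    hstar t (lams n (apps (atom_tm a) ts)) ->
    length ts = length ts' ->
    (forall i d, i < length ts -> NR (nth i ts d) (nth i ts' d)) ->
    NR t (lams n (apps (atom_tm a) ts')).

End Terms.

(* Main.v *)
Require Import Defs.
From Stdlib Require Import List Relations Lia.
Import ListNotations.
Set Implicit Arguments.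

Section P.
Variable C : Type.
Variable bot : C.

Lemma w_b (s s' : term C) : wstep s s' -> bstep s s'.
Proof. induction 1; constructor; auto. Qed.
Lemma h_b (s s' : term C) : hstep s s' -> bstep s s'.
Proof. induction 1; [apply w_b|constructor]; auto. Qed.
Lemma hs_bs (s s' : term C) : hstar s s' -> bstar s s'.
Proof. induction 1; [apply rt_step, h_b|apply rt_refl|eapply rt_trans]; eauto. Qed.

Lemma w_det (s a0 b0 : term C) : wstep s a0 -> wstep s b0 -> a0 = b0.
Proof.
  intros H; revert b0; induction H; intros b0 Hb; inversion Hb; subst; auto.
  - inversion H2.
  - inversion H.
  - f_equal; auto.
Qed.
Lemma h_det (s a0 b0 : term C) : hstep s a0 -> hstep s b0 -> a0 = b0.
Proof.
  intros H; revert b0; induction H; intros b0 Hb; inversion Hb; subst.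
  - eapply w_det; eauto.
  - inversion H.
  - inversion H0.
  - f_equal; auto.
Qed.

Lemma apps_nf (ts : list (term C)) : forall h,
  (forall h', ~ wstep h h') -> (forall s, h <> Lam s) ->
  (forall h', ~ wstep (apps h ts) h') /\ (forall s, apps h ts <> Lam s).
Proof.
  induction ts as [|x ts IH]; intros h H1 H2; simpl; auto.
  apply IH.
  - intros h' Hw; inversion Hw; subst. eapply H2; eauto. eapply H1; eauto.
  - discriminate.
Qed.

Lemma atom_nf (a : atom C) ts :
  (forall h', ~ wstep (apps (atom_tm a) ts) h') /\ (forall s, apps (atom_tm a) ts <> Lam s).
Proof. apply apps_nf; destruct a; simpl; intros ? H; inversion H. Qed.

Lemma lams_nf n (a : atom C) ts h' : ~ hstep (lams n (apps (atom_tm a) ts)) h'.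
Proof.
  revert h'; induction n; simpl; intros h' H.
  - inversion H; subst. eapply (proj1 (atom_nf a ts)); eauto.
    eapply (proj2 (atom_nf a ts)); eauto.
  - inversion H; subst. inversion H0. eapply IHn; eauto.
Qed.

Lemma hstar_nf (t u v : term C) : hstar t u -> hstar t v ->
  (forall x, ~ hstep u x) -> (forall x, ~ hstep v x) -> u = v.
Proof.
  intros H1 H2; apply clos_rt_rt1n in H1; apply clos_rt_rt1n in H2.
  revert v H2; induction H1; intros v H2 Nu Nv.
  - destruct H2 as [|y0 z0 Hx Hy]; auto. exfalso; exact (Nu _ Hx).
  - destruct H2 as [|y0 z0 Hx Hy]. exfalso; exact (Nv _ H).
    pose proof (h_det H Hx); subst. auto.
Qed.

Lemma apps_snoc (h : term C) l x : apps h (l ++ [x]) = App (apps h l) x.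
Proof. unfold apps; rewrite fold_left_app; reflexivity. Qed.

Lemma apps_inj (ts1 : list (term C)) : forall a1 a2 ts2,
  apps (atom_tm a1) ts1 = apps (atom_tm a2) ts2 -> a1 = a2 /\ ts1 = ts2.
Proof.
  induction ts1 as [|x l IH] using rev_ind; intros a1 a2 ts2 E;
  destruct ts2 as [|y l2 _] using rev_ind; simpl in *.
  - destruct a1, a2; simpl in E; inversion E; auto.
  - rewrite apps_snoc in E. destruct a1; discriminate.
  - rewrite apps_snoc in E. destruct a2; discriminate.
  - rewrite !apps_snoc in E. inversion E; subst.
    destruct (IH _ _ _ H0); subst; auto.
Qed.

Lemma lams_inj n1 : forall n2 (a1 a2 : atom C) ts1 ts2,
  lams n1 (apps (atom_tm a1) ts1) = lams n2 (apps (atom_tm a2) ts2) ->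
  n1 = n2 /\ a1 = a2 /\ ts1 = ts2.
Proof.
  induction n1; intros [|n2] a1 a2 ts1 ts2 E; simpl in E.
  - destruct (apps_inj _ _ _ _ E); auto.
  - exfalso; eapply (proj2 (atom_nf a1 ts1)); eauto.
  - exfalso; eapply (proj2 (atom_nf a2 ts2)); eauto.
  - inversion E. destruct (IHn1 _ _ _ _ _ H0) as [? [? ?]]; auto.
Qed.

Definition R (x y : term C) := exists t, NR bot t x /\ NR bot t y.

Definition S (x y : term C) := exists n a ts1 ts2,
  x = lams n (apps (atom_tm a) ts1) /\ y = lams n (apps (atom_tm a) ts2) /\
  Forall2 R ts1 ts2.

Lemma R_S x y : R x y -> S x y.
Proof.
  intros [t [H1 H2]].
  destruct H1 as [t Nh|t n a ts ts' Ha Hs Hl Hn];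
  destruct H2 as [t' Nh'|t' n' a' us us' Ha' Hs' Hl' Hn'].
  - exists 0, (ACst bot), [], []; simpl; auto.
  - exfalso; apply Nh. eexists; split; [apply hs_bs; eauto|]. do 3 eexists; eauto.
  - exfalso; apply Nh'. eexists; split; [apply hs_bs; eauto|]. do 3 eexists; eauto.
  - pose proof (hstar_nf Hs Hs' (@lams_nf _ _ _) (@lams_nf _ _ _)) as E.
    destruct (lams_inj _ _ _ _ _ _ E) as [? [? ?]]; subst.
    exists n', a', ts', us'; repeat split; auto.
    assert (forall i d, i < length us -> R (nth i ts' d) (nth i us' d)) as HR.
    { intros i d Hi. exists (nth i us d); auto. }
    clear -Hl Hl' HR. revert ts' us' Hl Hl' HR.
    induction us as [|u us IH]; intros [|x xs] [|y ys] Hl Hl' HR; simpl in *;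
      try discriminate; constructor.
    + apply (HR 0 u); lia.
    + apply IH; auto. intros i d Hi. apply (HR (Datatypes.S i) d); lia.
Qed.

Inductive F : term C -> term C -> Prop :=
| F_var : forall n : nat, F (@Var C n) (@Var C n)
| F_cst : forall c : C, F (@Cst C c) (@Cst C c)
| F_app : forall a b a' b', S a a' -> S b b' -> F (App a b) (App a' b')
| F_lam : forall s s', S s s' -> F (Lam s) (Lam s').

Lemma S_F : forall x y, S x y -> F x y.
Proof.
  intros x y [n [a [ts1 [ts2 [-> [-> HF]]]]]].
  destruct n as [|n]; simpl.
  - destruct ts1 as [|x1 l1 _] using rev_ind.
    + inversion HF; subst. simpl. destruct a; constructor.
    + apply Forall2_app_inv_l in HF as [l2 [r2 [H1 [H2 ->]]]].
      inversion H2; subst. inversion H5; subst.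
      rewrite !apps_snoc. constructor.
      * exists 0, a, l1, l2; auto.
      * apply R_S; auto.
  - constructor. exists n, a, ts1, ts2; auto.
Qed.

Lemma S_bisim : forall x y, S x y -> bisim x y.
Proof.
  cofix CH. intros x y H. destruct (S_F H); constructor; apply CH; auto.
Qed.

End P.

Theorem lemma5p38 (C : Type) (bot : C) (t s1 s2 : term C) :
  NR bot t s1 -> NR bot t s2 -> bisim s1 s2.
Proof.
  intros H1 H2. apply (S_bisim (bot:=bot)), (R_S (bot:=bot)). exists t; auto.
Qed.
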